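(* Let $\mathcal{X},\mathcal{Y}$ be Polish spaces, let $\mathcal{S}=\{p_1,\ldots,p_{|\mathcal{S}|}\}$ be a finite set of probability measures on $\mathcal{X}$, let $\mathcal{H}=\{h_i\}_{i=1}^M$ be a finite set of real-valued functions on the space $\mathcal{M}_1(\mathcal{X}\times\mathcal{Y})$ of joint distributions, and let $\theta\in\mathbb{R}^M$ be the associated constraint levels. Then a rate $R$ is robust one-shot achievable only if $R\ge\bar{R}(\theta)$.
   Context: A conditional distribution $Q_{Y|X}$ is a stochastic kernel from $\mathcal{X}$ to $\mathcal{Y}$; for $\mu_X\in\mathcal{M}_1(\mathcal{X})$, $\mu_XQ_{Y|X}$ denotes the induced joint law and $I(\mu_X,Q_{Y|X})$ its mutual information. The set $\mathcal{L}(\theta)$ consists of all conditional distributions $Q_{Y|X}$ such that $h_i[\mu_XQ_{Y|X}]\le\theta_i$ for all $\mu_X\in\mathcal{S}$ and all $i\in\{1,\ldots,M\}$. The robust information rate function is $\bar{R}(\theta)=\inf_{Q_{Y|X}\in\mathcal{L}(\theta)}\sup_{\mu_X\in\mathcal{S}}I(\mu_X,Q_{Y|X})$. A rate $R$ is robust one-shot achievable if there exist an encoder $f:\mathcal{X}\times\mathcal{Z}\to\mathbb{N}_0$, a decoder $g:\mathbb{N}_0\times\mathcal{Z}\to\mathcal{Y}$ and a random variable $Z$ valued in a set $\mathcal{Z}$ (common randomness, independent of the source) such that for every $\mu_X\in\mathcal{S}$, with $X\sim\mu_X$, $M=f(X,Z)$ and $Y=g(M,Z)$, one has $H(M\mid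 Z)\le R$ and the induced joint distribution $P_{X,Y}$ satisfies $h_i(P_{X,Y})\le\theta_i$ for all $i$. *)

(* Defs.v *)
From mathcomp Require Import all_boot all_order all_algebra.
From mathcomp Require Import all_classical all_reals all_analysis.

Set Implicit Arguments.
Unset Strict Implicit.
Unset Printing Implicit Defensive.
Import Order.TTheory GRing.Theory Num.Theory.

Local Open Scope classical_set_scope.
Local Open Scope ring_scope.

Section polish.
Context {R : realType} {T : Type}.

Definition is_metric (dist : T -> T -> R) : Prop :=
  [/\ (forall x y, 0 <= dist x y),
      (forall x y, dist x y = 0 <-> x = y),
      (forall x y, dist x y = dist y x) &
      (forall x y z, dist x z <= dist x y + dist y z)].

Definition metric_open (dist : T -> T -> R) (U : set T) : Prop :=
  forall x, U x -> exists2 e : R, 0 < e & forall y, dist x y < e -> U y.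

Definition metric_complete (dist : T -> T -> R) : Prop :=
  forall u : nat -> T,
    (forall e : R, 0 < e -> exists N, forall m n, (N <= m)%N -> (N <= n)%N ->
        dist (u m) (u n) < e) ->
    exists x, forall e : R, 0 < e -> exists N, forall n, (N <= n)%N -> dist (u n) x < e.

Definition metric_separable (dist : T -> T -> R) : Prop :=
  exists u : nat -> T, forall x (e : R), 0 < e -> exists n, dist x (u n) < e.
End polish.

Definition polish_measurable (R : realType) d (T : measurableType d) : Prop :=
  exists dist : T -> T -> R,
    [/\ is_metric dist, metric_complete dist, metric_separable dist &
        @measurable d T = <<s [set U | metric_open dist U] >>].

Section info.
Context {R : realType}.

Definition plogpq (p q : R) : R := if p == 0 then 0 else p * ln (p / q).

Definition ent_term (p : R) : R := if p == 0 then 0 else - (p * ln p).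

Definition entropy (p : nat -> R) : \bar R :=
  (\sum_(0 <= m <oo) (ent_term (p m))%:E)%E.

Context {d : measure_display} {T : measurableType d}.
Definition finite_partition (n : nat) (A : 'I_n -> set T) : Prop :=
  [/\ (forall i, measurable (A i)),
      (forall i j, i != j -> A i `&` A j = set0) &
      \bigcup_(i in [set: 'I_n]) A i = [set: T]].
End info.

Section mutual_information.
Context {R : realType} {dx dy : measure_display}
  {X : measurableType dx} {Y : measurableType dy}.

Definition partition_mi (P : set (X * Y) -> \bar R) n m
    (A : 'I_n -> set X) (B : 'I_m -> set Y) : R :=
  \sum_(i < n) \sum_(j < m)
     plogpq (fine (P (A i `*` B j)))
            (fine (P (A i `*` [set: Y])) * fine (P ([set: X] `*` B j))).

(* Mutual information of a joint law (Dobrushin / Gelfand-Yaglom-Perez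
   definition: supremum over finite measurable partitions) *)
Definition mutual_information (P : set (X * Y) -> \bar R) : \bar R :=
  ereal_sup [set r : \bar R | exists n m (A : 'I_n -> set X) (B : 'I_m -> set Y),
     [/\ finite_partition A, finite_partition B & r = (partition_mi P A B)%:E]].

Definition joint_law (mu : probability X R) (Q : R.-pker X ~> Y)
    : set (X * Y) -> \bar R :=
  fun A => (\int[mu]_x Q x [set y | A (x, y)])%E.

Definition I_info (mu : probability X R) (Q : R.-pker X ~> Y) : \bar R :=
  mutual_information (joint_law mu Q).

Context {K M : nat} (S : 'I_K -> probability X R)
  (h : 'I_M -> probability (X * Y)%type R -> R) (theta : 'I_M -> R).

Definition meets_constraints (J : set (X * Y) -> \bar R) : Prop :=
  forall (i : 'I_M) (P : probability (X * Y)%type R),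
    (forall A, measurable A -> P A = J A) -> h i P <= theta i.

Definition L_theta : set (R.-pker X ~> Y) :=
  [set Q | forall k : 'I_K, meets_constraints (joint_law (S k) Q)].

Definition robust_rate : \bar R :=
  ereal_inf [set ereal_sup [set I_info (S k) Q | k in [set: 'I_K]]
            | Q in L_theta].

(* H(M | Z) with M = f(X, Z): the conditional law of M given Z = z is the
   law of f(X, z) (by independence of X and Z) *)
Definition code_cond_entropy {dz} {Zt : measurableType dz}
    (mu : probability X R) (PZ : probability Zt R) (f : X * Zt -> nat) : \bar R :=
  (\int[PZ]_z entropy (fun m => fine (mu [set x | f (x, z) = m])))%E.

Definition code_joint_law {dz} {Zt : measurableType dz}
    (mu : probability X R) (PZ : probability Zt R)
    (f : X * Zt -> nat) (g : nat * Zt -> Y) : set (X * Y) -> \bar R :=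
  fun A => (\int[mu]_x PZ [set z | A (x, g (f (x, z), z))])%E.

Definition robust_one_shot_achievable (Rt : R) : Prop :=
  exists (dz : measure_display) (Zt : measurableType dz) (PZ : probability Zt R)
         (f : X * Zt -> nat) (g : nat * Zt -> Y),
    [/\ measurable_fun [set: X * Zt] f,
        measurable_fun [set: nat * Zt] g &
        forall k : 'I_K,
          (code_cond_entropy (S k) PZ f <= Rt%:E)%E /\
          meets_constraints (code_joint_law (S k) PZ f g)].
End mutual_information.

(* Main.v *)
Require Import Defs.
From mathcomp Require Import all_boot all_order all_algebra.
From mathcomp Require Import all_classical all_reals all_analysis.
From mathcomp Require Import measurable_realfun.
From HB Require Import structures.
From mathcomp Require Import ring lra.
Set Implicit Arguments.
Unset Strict Implicit.
Unset Printing Implicit Defensive.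
Import Order.TTheory GRing.Theory Num.Theory.
Local Open Scope classical_set_scope.
Local Open Scope ring_scope.


Lemma ln_le_sub1 (R : realType) (t : R) : 0 < t -> ln t <= t - 1.
Proof.
move=> t0; have := @le_ln1Dx R (t - 1).
rewrite (_ : 1 + (t - 1) = t); last by rewrite addrC subrK.
by apply; lra.
Qed.

Lemma Gterm_le (R : realType) (a b P p q : R) :
  0 <= a -> a <= p -> a <= b -> b <= 1 -> 0 <= P -> P <= p -> P <= q ->
  (if P == 0 then 0 else a * (ln (P / (p * q)) + 1) - b * (P / q))
    <= a * (- ln b).
Proof.
move=> a0 ap ab b1 P0 Pp Pq.
have lnb : ln b <= 0 by exact: ln_le0.
case: eqP => [_|/eqP PN0]; first by rewrite mulr_ge0 // oppr_ge0.
have Ppos : 0 < P by rewrite lt_def PN0.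
have ppos : 0 < p by exact: lt_le_trans Pp.
have qpos : 0 < q by exact: lt_le_trans Pq.
have [->|aN0] := eqVneq a 0.
  rewrite !mul0r add0r oppr_le0 mulr_ge0 ?divr_ge0 //; last exact: ltW.
  by apply: le_trans ab.
have apos : 0 < a by rewrite lt_def aN0.
have bpos : 0 < b by exact: lt_le_trans ab.
set t := P * b / (p * q).
have tpos : 0 < t by rewrite /t !(mulr_gt0, divr_gt0, invr_gt0).
have lnt : ln t = ln (P / (p * q)) + ln b.
  rewrite /t -lnM ?posrE ?divr_gt0 ?mulr_gt0 //.
  by congr ln; rewrite mulrAC.
have h1 : ln (P / (p * q)) + 1 <= t - ln b.
  by have := ln_le_sub1 tpos; rewrite lnt; lra.
have h2 : a * t <= b * (P / q).
  have -> : b * (P / q) = p * t.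
    by rewrite /t; field; rewrite (gt_eqF ppos) (gt_eqF qpos).
  by rewrite ler_wpM2r // ltW.
have := ler_wpM2l a0 h1.
rewrite mulrBr; lra.
Qed.

Lemma ent_bound (R : realType) (r b : R) : 0 <= r -> r <= b ->
  (- ln b) * r <= ent_term r.
Proof.
move=> r0 rb; rewrite /ent_term; case: eqP => [->|/eqP rN0]; first by rewrite mulr0.
have rpos : 0 < r by rewrite lt_def rN0.
have bpos : 0 < b by exact: lt_le_trans rb.
rewrite mulrC -mulrN; apply: ler_wpM2l => //.
by rewrite lerN2 ler_ln ?posrE.
Qed.

Section kern.
Local Open Scope ereal_scope.
Context {R : realType} {dx dy dz : measure_display} {X : measurableType dx}
  {Y : measurableType dy} {Zt : measurableType dz}.
Variables (PZ : probability Zt R) (yc : {mfun (X * Zt)%type >-> Y}).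

Definition qx (x : X) : set Y -> \bar R := fun B => PZ [set z | B (yc (x, z))].

Lemma myc_x x : measurable_fun [set: Zt] (fun z => yc (x, z)).
Proof. exact: measurable_fun_pair2. Qed.

Let qx0 x : qx x set0 = 0.
Proof. by rewrite /qx (_ : [set z | set0 _] = set0) ?measure0. Qed.

Let qx_ge0 x B : 0 <= qx x B.
Proof. exact: measure_ge0. Qed.

Let qx_sa x : semi_sigma_additive (qx x).
Proof.
move=> F mF tF mUF; rewrite /qx.
have -> : [set z | (\bigcup_n F n) (yc (x, z))] = \bigcup_n [set z | F n (yc (x, z))].
  by apply/seteqP; split => z /= [n _ Fn]; exists n.
apply: measure_semi_sigma_additive.
- by move=> n; rewrite -[X in measurable X]setTI; exact: (myc_x x).
- apply/trivIsetP => /= i j _ _ ij.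
  have Fij : F i `&` F j = set0 by move/trivIsetP : tF; apply.
  apply/seteqP; split => z //= [a b].
  have : (F i `&` F j) (yc (x, z)) by [].
  by rewrite Fij.
- by apply: bigcup_measurable => n _; rewrite -[X in measurable X]setTI; exact: (myc_x x).
Qed.

HB.instance Definition _ x := isMeasure.Build _ _ _ (qx x) (qx0 x) (qx_ge0 x) (@qx_sa x).

Definition Qk : X -> {measure set Y -> \bar R} := fun x => qx x.

Let mQk U : measurable U -> measurable_fun [set: X] (fun x => Qk x U).
Proof.
move=> mU.
pose E := [set p : (X * Zt)%type | U (yc p)].
have mE : measurable E by rewrite -[X in measurable X]setTI; exact: measurable_funPT.
have := measurable_fun_xsection PZ mE.
apply: eq_measurable_fun => x _ /=; rewrite /Qk /qx /=; congr (PZ _).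
by apply/seteqP; split => z /=; rewrite /xsection /= inE.
Qed.

HB.instance Definition _ := isKernel.Build _ _ _ _ _ Qk mQk.

Let Qk_prob x : Qk x [set: Y] = 1.
Proof. by rewrite /Qk /= /qx /= (_ : [set z | _] = setT) ?probability_setT. Qed.

HB.instance Definition _ := Kernel_isProbability.Build _ _ _ _ _ Qk Qk_prob.

Definition Qp : R.-pker X ~> Y := Qk.

End kern.

Section main.
Local Open Scope ereal_scope.
Context {R : realType} {dx dy dz : measure_display} {X : measurableType dx}
  {Y : measurableType dy} {Zt : measurableType dz}.
Variables (PZ : probability Zt R) (yc : {mfun (X * Zt)%type >-> Y})
  (mu : probability X R).

Definition w (E : set (X * Y)) (z : Zt) : \bar R := mu [set x | E (x, yc (x, z))].
Definition Epre (E : set (X * Y)) : set (X * Zt) := [set p | E (p.1, yc p)].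

Lemma mEpre E : measurable E -> measurable (Epre E).
Proof.
move=> mE.
have mh : measurable_fun [set: (X * Zt)%type] (fun p : X * Zt => (p.1, yc p)).
  apply/measurable_fun_pairP; split => /=; [exact: measurable_fst|exact: measurable_funPT].
by rewrite -[X in measurable X]setTI; exact: mh.
Qed.

Lemma w_ysection E : w E = mu \o ysection (Epre E).
Proof.
apply/funext => z; rewrite /w /=; congr (mu _).
by apply/seteqP; split => x; rewrite /ysection /= inE.
Qed.

Lemma mwset E z : measurable E -> measurable [set x | E (x, yc (x, z))].
Proof.
move=> mE; have := measurable_ysection z (mEpre mE).
by congr measurable; apply/seteqP; split => x; rewrite /ysection /= inE.
Qed.

Lemma mw E : measurable E -> measurable_fun [set: Zt] (w E).
Proof. by move=> mE; rewrite w_ysection; exact: measurable_fun_ysection (mEpre mE). Qed.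

Lemma w_ge0 E z : 0 <= w E z.
Proof. exact: measure_ge0. Qed.

Lemma w_le1 E z : measurable E -> w E z <= 1.
Proof. by move=> mE; apply: probability_le1; exact: mwset. Qed.

Lemma J_E E : measurable E ->
  joint_law mu (Qp PZ yc) E = \int[PZ]_z w E z.
Proof.
move=> mE.
have -> : joint_law mu (Qp PZ yc) E = (mu \x PZ) (Epre E).
  rewrite /joint_law /product_measure1; apply: eq_integral => x _ /=.
  rewrite /Qp /Qk /qx /=; congr (PZ _).
  by apply/seteqP; split => z; rewrite /xsection /= inE.
rewrite (@product_measure_unique _ _ _ _ _ mu PZ (mu \x^ PZ)) ?(mEpre mE)//.
  by rewrite /product_measure2 w_ysection.
move=> A B mA mB; exact: product_measure2E.
exact: mEpre.
Qed.


Variables (f : (X * Zt)%type -> nat) (g : (nat * Zt)%type -> Y).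
Hypothesis mf : measurable_fun [set: (X * Zt)%type] f.
Hypothesis hyc : forall p, yc p = g (f p, p.2).

Lemma mfk z k : measurable [set x | f (x, z) = k].
Proof.
have := measurable_fun_pair1 z mf.
move=> /(_ measurableT [set k] Logic.I); rewrite setTI.
by congr measurable; apply/seteqP; split => x /=.
Qed.

Lemma series_bound z m (B : 'I_m -> set Y) : finite_partition B ->
  \sum_(j < m) ((- ln (fine (w ([set: X] `*` B j) z))) *
                 fine (w ([set: X] `*` B j) z))%:E
   <= entropy (fun k => fine (mu [set x | f (x, z) = k])).
Proof.
move=> [mB dB cB].
set r := fun k => mu [set x | f (x, z) = k].
have rfin k : r k \is a fin_num.
  by rewrite ge0_fin_numE ?measure_ge0// (le_lt_trans (probability_le1 _ (mfk z k))) ?ltry.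
have wfin j : w ([set: X] `*` B j) z \is a fin_num.
  by rewrite ge0_fin_numE ?w_ge0// (le_lt_trans (w_le1 z (measurableX measurableT (mB j)))) ?ltry.
have bE j : w ([set: X] `*` B j) z =
    \sum_(k <oo) (if `[< B j (g (k, z)) >] then r k else 0).
  rewrite /w.
  have -> : [set x | ([set: X] `*` B j) (x, yc (x, z))] =
      \bigcup_k [set x | f (x, z) = k /\ B j (g (k, z))].
    apply/seteqP; split => x /=.
      by move=> [_ Bx]; exists (f (x, z)) => //; split => //; rewrite -hyc.
    by move=> [k _ [<- Bk]]; split => //; rewrite hyc.
  have setE k : [set x | f (x, z) = k /\ B j (g (k, z))] =
      if `[< B j (g (k, z)) >] then [set x | f (x, z) = k] else set0.
    by case: asboolP => Bk; apply/seteqP; split => x //= [].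
  have msetE k : measurable [set x | f (x, z) = k /\ B j (g (k, z))].
    by rewrite setE; case: ifP => _; [exact: mfk|exact: measurable0].
  rewrite measure_semi_bigcup //.
  - apply: eq_eseriesr => k _; rewrite setE.
    by case: ifP => _ //; rewrite measure0.
  - apply/trivIsetP => k l _ _ kl; apply/seteqP; split => x //= [[fk _] [fl _]].
    by move/eqP: kl; apply; rewrite -fk -fl.
  - exact: bigcup_measurable.
set c := fun j => (- ln (fine (w ([set: X] `*` B j) z)))%R.
have mBj j : measurable ([set: X] `*` B j) by exact: measurableX.
have c0 j : (0 <= c j)%R.
  rewrite /c oppr_ge0 ln_le0// -lee_fin fineK//; exact: w_le1.
have step j : ((c j) * fine (w ([set: X] `*` B j) z))%:E =
    \sum_(k <oo) ((c j)%:E * (if `[< B j (g (k, z)) >] then r k else 0)).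
  rewrite EFinM (fineK (wfin j)) bE nneseriesZl// => k _.
  by case: ifP => _ //; exact: measure_ge0.
rewrite (eq_bigr _ (fun j _ => step j)) -nneseries_sum; last first.
  move=> j k _; rewrite mule_ge0 ?lee_fin//.
  by case: ifP => _ //; exact: measure_ge0.
rewrite /entropy; apply: lee_nneseries => [k _ _|k _].
  by rewrite sume_ge0// => j _; rewrite mule_ge0 ?lee_fin//; case: ifP => _ //; exact: measure_ge0.
have : (\bigcup_(i in [set: 'I_m]) B i) (g (k, z)) by rewrite cB.
move=> [j0 _ Bj0].
rewrite (bigD1 j0) //= big1 ?adde0; last first.
  move=> j jj0; case: asboolP => Bj; last by rewrite mule0.
  have := dB j j0 jj0; move/seteqP => [+ _] => /(_ (g (k, z))) /=.
  by move=> /(_ (conj Bj Bj0)).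
rewrite asboolT// -(fineK (rfin k)) -EFinM lee_fin.
apply: ent_bound; first exact: fine_ge0 (measure_ge0 _ _).
apply: fine_le => //.
apply: le_measure; rewrite ?inE; [exact: mfk|exact: mwset|].
by move=> x /= fxk; split => //; rewrite hyc /= fxk.
Qed.



Lemma le_integral_nm (f1 f2 : Zt -> \bar R) :
  (forall z, 0 <= f1 z) -> (forall z, f1 z <= f2 z) ->
  \int[PZ]_z f1 z <= \int[PZ]_z f2 z.
Proof.
move=> f10 f12.
have f20 z : 0 <= f2 z by apply: le_trans (f12 z).
rewrite (ge0_integralTE PZ f10) (ge0_integralTE PZ f20) /=.
apply: ge_ereal_sup => _ [h hf <-]; apply: ereal_sup_ubound => /=.
by exists h => // z; apply: le_trans (f12 z).
Qed.

Lemma wfin E z : measurable E -> w E z \is a fin_num.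
Proof.
by move=> mE; rewrite ge0_fin_numE ?w_ge0// (le_lt_trans (w_le1 z mE)) ?ltry.
Qed.

Lemma int_w_le1 E : measurable E -> \int[PZ]_z w E z <= 1.
Proof.
move=> mE; apply: (@le_trans _ _ (\int[PZ]_z (cst 1) z)).
  apply: ge0_le_integral => //; first exact: mw.
  by move=> z _; exact: w_le1.
rewrite integral_cst //.
by rewrite mul1e; apply: probability_le1.
Qed.

Lemma int_w E : measurable E -> PZ.-integrable [set: Zt] (w E).
Proof.
move=> mE; apply/integrableP; split; first exact: mw.
under eq_integral do rewrite gee0_abs ?w_ge0//.
by apply: le_lt_trans (int_w_le1 mE) _; rewrite ltry.
Qed.

Lemma int_a E : measurable E ->
  PZ.-integrable [set: Zt] (fun z => (fine (w E z))%:E).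
Proof.
move=> mE; apply: eq_integrable (int_w mE) => // z _.
by rewrite fineK// wfin.
Qed.

Let J := joint_law mu (Qp PZ yc).

Lemma Jfin E : measurable E -> J E \is a fin_num.
Proof.
move=> mE; rewrite /J J_E// ge0_fin_numE; last by apply: integral_ge0 => *; exact: w_ge0.
by apply: le_lt_trans (int_w_le1 mE) _; rewrite ltry.
Qed.

Lemma int_aE E : measurable E ->
  \int[PZ]_z (fine (w E z))%:E = (fine (J E))%:E.
Proof.
move=> mE; rewrite fineK ?Jfin// /J J_E//.
by apply: eq_integral => z _; rewrite fineK// wfin.
Qed.

Lemma J_mono E1 E2 : measurable E1 -> measurable E2 -> E1 `<=` E2 ->
  (fine (J E1) <= fine (J E2))%R.
Proof.
move=> m1 m2 s12; apply: fine_le; try exact: Jfin.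
rewrite /J !J_E//; apply: ge0_le_integral => //; try exact: mw.
move=> z _; apply: le_measure; rewrite ?inE; try exact: mwset.
by move=> x /=; exact: s12.
Qed.

Lemma w_mono E1 E2 z : measurable E1 -> measurable E2 -> E1 `<=` E2 ->
  (fine (w E1 z) <= fine (w E2 z))%R.
Proof.
move=> m1 m2 s12; apply: fine_le; try exact: wfin.
apply: le_measure; rewrite ?inE; try exact: mwset.
by move=> x /=; exact: s12.
Qed.

Lemma J_AT (A : set X) : measurable A -> J (A `*` [set: Y]) = mu A.
Proof.
move=> mA; rewrite /J J_E ?measurableX//.
rewrite (eq_integral (cst (mu A))) ?integral_cst//.
  by rewrite -[RHS]mule1; congr (_ * _); exact: probability_setT.
move=> z _ /=; rewrite /w; congr (mu _).
by apply/seteqP; split => x /= => [[]|].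
exact: measurableX.
Qed.


Lemma H_ge0 z : 0 <= entropy (fun k => fine (mu [set x | f (x, z) = k])).
Proof.
apply: nneseries_ge0 => k _ _; rewrite lee_fin /ent_term.
case: eqP => // _; rewrite oppr_ge0 mulr_ge0_le0 ?fine_ge0 ?measure_ge0// ln_le0//.
rewrite -lee_fin fineK; first exact: probability_le1 (mfk z k).
by rewrite ge0_fin_numE ?measure_ge0// (le_lt_trans (probability_le1 _ (mfk z k))) ?ltry.
Qed.

Lemma mi_bound n m (A : 'I_n -> set X) (B : 'I_m -> set Y) :
  finite_partition A -> finite_partition B ->
  (partition_mi J A B)%:E <=
    \int[PZ]_z entropy (fun k => fine (mu [set x | f (x, z) = k])).
Proof.
move=> hA hB; have [mA dA cA] := hA; have [mB dB cB] := hB.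
have mAB i j : measurable (A i `*` B j) by exact: measurableX.
have mAT i : measurable (A i `*` [set: Y]) by exact: measurableX.
have mTB j : measurable ([set: X] `*` B j) by exact: measurableX.
set Pv := fun i j => fine (J (A i `*` B j)).
set pv := fun i => fine (J (A i `*` [set: Y])).
set qv := fun j => fine (J ([set: X] `*` B j)).
set a := fun i j z => fine (w (A i `*` B j) z).
set b := fun j z => fine (w ([set: X] `*` B j) z).
set G := fun i j z => if Pv i j == 0%R then 0%R else
  (a i j z * (ln (Pv i j / (pv i * qv j)) + 1) - b j z * (Pv i j / qv j))%R.
have intG i j : PZ.-integrable [set: Zt] (fun z => (G i j z)%:E).
  rewrite /G; case: eqP => _.
    apply/integrableP; split => //.
    rewrite (eq_integral (cst 0)) ?integral0 ?ltry // => z _ /=.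
    by rewrite normr0.
  have h : PZ.-integrable [set: Zt] (fun z => (a i j z * (ln (Pv i j / (pv i * qv j)) + 1))%:E -
                                (b j z * (Pv i j / qv j))%:E).
    apply: integrableB => //.
      under eq_fun do rewrite mulrC EFinM.
      exact: integrableZl (int_a (mAB i j)).
    under eq_fun do rewrite mulrC EFinM.
    exact: integrableZl (int_a (mTB j)).
  by apply: eq_integrable h => // z _; rewrite EFinB.
have Pv0 i j : (0 <= Pv i j)%R.
  by apply: fine_ge0; rewrite /J J_E//; apply: integral_ge0 => *; exact: w_ge0.
have Pvp i j : (Pv i j <= pv i)%R by apply: J_mono => // -[x y] /= [].
have Pvq i j : (Pv i j <= qv j)%R by apply: J_mono => // -[x y] /= [].
have IG i j : \int[PZ]_z (G i j z)%:E = (plogpq (Pv i j) (pv i * qv j))%:E.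
  rewrite /G /plogpq; case: eqP => P0.
    by rewrite (eq_integral (cst 0)) ?integral0.
  have qv0 : qv j != 0%R.
    by rewrite gt_eqF// (lt_le_trans _ (Pvq i j))// lt_def (Pv0 i j) andbT; apply/eqP.
  under eq_integral do rewrite EFinB.
  have e1 (E : set (X * Y)) (K : R) : measurable E ->
      \int[PZ]_x ((fine (w E x)) * K)%:E = (K * fine (J E))%:E.
    move=> mE; under eq_integral do rewrite mulrC EFinM.
    by rewrite integralZl ?int_aE// ?EFinM//; exact: int_a.
  have i1 (E : set (X * Y)) (K : R) : measurable E ->
      PZ.-integrable [set: Zt] (EFin \o (fun x => (fine (w E x)) * K)%R).
    move=> mE; apply: (eq_integrable measurableT _ _ _ (integrableZl measurableT K (int_a mE))) => z _ /=.
    by rewrite mulrC EFinM.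
  rewrite integralB_EFin // ?e1 ?i1 //.
  rewrite -EFinB; congr EFin.
  rewrite -/(Pv i j) -/(qv j).
  rewrite divfK // mulrDl mul1r addrK mulrC //.
set H := fun z => entropy (fun k => fine (mu [set x | f (x, z) = k])).
have ptw z : (\sum_i \sum_j G i j z)%:E <= H z.
  have sa j : (\sum_i a i j z <= b j z)%R.
    rewrite -lee_fin -sumEFin.
    have -> : \sum_i (a i j z)%:E = \sum_i w (A i `*` B j) z.
      by apply: eq_bigr => i _; rewrite /a fineK// wfin.
    rewrite /b fineK ?wfin// /w -measure_bigsetU_ord //.
    - apply: le_measure; rewrite ?inE.
      + by apply: bigsetU_measurable => i _; exact: mwset.
      + exact: mwset.
      + apply: (big_ind (fun S => S `<=` _)) => //.
          by move=> S1 S2 h1 h2 x [/h1|/h2].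
        by move=> i _ x /= [].
    - by move=> i; exact: mwset.
    - apply/trivIsetP => i k _ _ ik; apply/seteqP; split => x //= [[Ai _] [Ak _]].
      by have := dA i k ik; move/seteqP => [+ _] => /(_ x (conj Ai Ak)).
  have b1 j : (b j z <= 1)%R by rewrite -lee_fin fineK ?wfin ?w_le1.
  have Gle i j : (G i j z <= a i j z * (- ln (b j z)))%R.
    apply: Gterm_le => //.
    - by apply: fine_ge0; exact: w_ge0.
    - apply: (le_trans (w_mono z (mAB i j) (mAT i) _)); first by move=> -[x y] /= [].
      rewrite /pv J_AT//; apply: fine_le; rewrite ?wfin//.
        by rewrite ge0_fin_numE ?measure_ge0// (le_lt_trans (probability_le1 _ (mA i))) ?ltry.
      by apply: le_measure; rewrite ?inE; [exact: mwset|exact: mA|move=> x /= []].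
    - by apply: w_mono => // -[x y] /= [].
  apply: (@le_trans _ _ (\sum_(j < m) ((- ln (fine (w ([set: X] `*` B j) z))) *
                 fine (w ([set: X] `*` B j) z))%:E)); last exact: series_bound.
  rewrite sumEFin lee_fin.
  apply: (@le_trans _ _ (\sum_i \sum_j (a i j z * (- ln (b j z))))%R).
    by apply: ler_sum => i _; apply: ler_sum => j _; exact: Gle.
  rewrite exchange_big /=; apply: ler_sum => j _.
  rewrite -mulr_suml mulrC; apply: ler_wpM2l; last exact: sa.
  by rewrite oppr_ge0 ln_le0.
have -> : (partition_mi J A B)%:E = \int[PZ]_z (\sum_i \sum_j G i j z)%:E.
  have pt z : (\sum_i \sum_j G i j z)%:E = \sum_i \sum_j (G i j z)%:E.
    by rewrite -sumEFin; apply: eq_bigr => i _; rewrite -sumEFin.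
  rewrite (eq_integral (fun z => \sum_i \sum_j (G i j z)%:E)); last by move=> z _; exact: pt.
  rewrite (@integral_sum _ _ _ _ _ measurableT _ (fun i z => \sum_j (G i j z)%:E)); last first.
    by move=> i; apply: (integrable_sum measurableT) => j _; exact: intG.
  rewrite /partition_mi -sumEFin; apply: eq_bigr => i _.
  rewrite (@integral_sum _ _ _ _ _ measurableT _ (fun j z => (G i j z)%:E)) //.
  by rewrite -sumEFin; apply: eq_bigr => j _; rewrite IG.
rewrite integralE -[leRHS]sube0; apply: leeB; last first.
  by apply: integral_ge0 => z _; exact: funeneg_ge0.
apply: le_integral_nm => [z|z]; first exact: funepos_ge0.
by rewrite funeposE ge_max ptw /=; apply: H_ge0.
Qed.



End main.

Unset Implicit Arguments.
Theorem theorem4 (R : realType) (dx dy : measure_display)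
  (X : measurableType dx) (Y : measurableType dy)
  (HX : polish_measurable R X) (HY : polish_measurable R Y)
  (K : nat) (S : 'I_K -> probability X R)
  (M : nat) (h : 'I_M -> probability (X * Y)%type R -> R) (theta : 'I_M -> R)
  (Rt : R) :
  robust_one_shot_achievable S h theta Rt ->
  (robust_rate S h theta <= Rt%:E)%E.
Proof.
move=> [dz [Zt [PZ [f [g [mf mg HS]]]]]].
have myc : measurable_fun [set: (X * Zt)%type] (fun p : X * Zt => g (f p, p.2)).
  apply: measurableT_comp; first exact: mg.
  apply/measurable_fun_pairP; split; [exact: mf|exact: measurable_snd].
pose yc : {mfun (X * Zt)%type >-> Y} :=
  HB.pack (fun p : X * Zt => g (f p, p.2)) (isMeasurableFun.Build _ _ _ _ _ myc).
have hyc : forall p, yc p = g (f p, p.2) by [].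
pose Q := Qp PZ yc.
have QL : L_theta S h theta Q.
  move=> k; have [_ mc] := HS k.
  have -> : joint_law (S k) Q = code_joint_law (S k) PZ f g by [].
  exact: mc.
rewrite /robust_rate.
apply: (@le_trans _ _ (ereal_sup [set I_info (S k) Q | k in [set: 'I_K]])).
  by apply: ereal_inf_lbound; exists Q.
apply: ge_ereal_sup => _ [k _ <-].
rewrite /I_info /mutual_information.
apply: ge_ereal_sup => _ [n [m [A [B [hA hB ->]]]]].
apply: le_trans (mi_bound PZ (S k) mf hyc hA hB) _.
by have [hE _] := HS k.
Qed.
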